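(* Let $(X,d)$ be a compact metric space and $F$ a semiflow on $X$. For all $x,y\in X$, if $x\succcurlyeq_{\mathcal C} y$ then $x\succcurlyeq_{\mathcal S} y$. In particular $\mathcal R_{\mathcal C}\subset\mathcal R_{\mathcal S}$.
   Context: A semiflow on a metric space $(X,d)$ is a continuous map $F:[0,\infty)\times X\to X$, $(t,x)\mapsto F^t(x)$, with $F^0=\mathrm{id}$ and $F^{t+s}=F^t\circ F^s$ for all $t,s\ge0$. A curve is piecewise continuous if it is continuous except at finitely many points, at which one-sided limits exist. Conley chains: for $\varepsilon>0$, $T>0$, an $(\varepsilon,T)$-chain from $x$ to $y$ is a finite sequence $x=x_0,\dots,x_N=y$ in $X$ with times $t_i\ge T$ such that $d(F^{t_i}(x_i),x_{i+1})<\varepsilon$ for $i=0,\dots,N-1$. Write $x\succcurlyeq_{\mathcal C} y$ if for every $\varepsilon>0$ and $T>0$ there is an $(\varepsilon,T)$-chain from $x$ to $y$. Shadow chains: for $T\ge1$, a piecewise continuous $\gamma:[0,T]\to X$ is $\varepsilon$-close to $F$ if $d(\gamma(t+\tau),F^\tau(\gamma(t)))<\varepsilon$ for every $\tau\in[0,1]$ and $t\in[0,T-\tau]$. An $\varepsilon$-chain from $x$ to $y$ is such a $\gamma$ with $\gamma(0)=x$, $\gamma(T)=y$. Write $x\succcurlyeq_{\mathcal S} y$ if for every $\varepsilon>0$ there is an $\varepsilon$-chain from $x$ to $y$. For $\star\in\{\mathcal C,\mathcal S\}$: $x$ is $\star$-chain-recurrent if $x$ is a fixed point of $F$ or there is $y$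 with $x\succcurlyeq_\star y$ and $y\succcurlyeq_\star x$; $\mathcal R_\star$ denotes the set of $\star$-chain-recurrent points. *)

(* Defs.v *)
From Stdlib Require Import Reals Lra List.
Open Scope R_scope.

Section Defs.
Variables (X : Type) (d : X -> X -> R).

Definition is_metric : Prop :=
  (forall x y, 0 <= d x y) /\
  (forall x y, d x y = 0 <-> x = y) /\
  (forall x y, d x y = d y x) /\
  (forall x y z, d x z <= d x y + d y z).

Definition open_set (U : X -> Prop) : Prop :=
  forall x, U x -> exists e, 0 < e /\ forall y, d x y < e -> U y.

Definition compact_space : Prop :=
  forall (I : Type) (U : I -> X -> Prop),
    (forall i, open_set (U i)) ->
    (forall x, exists i, U i x) ->
    exists l : list I, forall x, exists i, In i l /\ U i x.

Definition is_semiflow (F : R -> X -> X) : Prop :=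
  (forall t x, 0 <= t -> forall e, 0 < e -> exists del, 0 < del /\
     forall s y, 0 <= s -> Rabs (s - t) < del -> d x y < del ->
       d (F t x) (F s y) < e) /\
  (forall x, F 0 x = x) /\
  (forall t s x, 0 <= t -> 0 <= s -> F (t + s) x = F t (F s x)).

Definition conley_chain (F : R -> X -> X) (e T : R) (x y : X) : Prop :=
  exists (N : nat) (xs : nat -> X) (ts : nat -> R),
    (1 <= N)%nat /\ xs 0%nat = x /\ xs N = y /\
    forall i, (i < N)%nat -> T <= ts i /\ d (F (ts i) (xs i)) (xs (S i)) < e.

Definition conley_le (F : R -> X -> X) (x y : X) : Prop :=
  forall e T, 0 < e -> 0 < T -> conley_chain F e T x y.

Definition cont_within_at (a b : R) (g : R -> X) (t : R) : Prop :=
  forall e, 0 < e -> exists del, 0 < del /\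
    forall s, a <= s <= b -> Rabs (s - t) < del -> d (g s) (g t) < e.

Definition left_limit_exists (a : R) (g : R -> X) (p : R) : Prop :=
  exists L, forall e, 0 < e -> exists del, 0 < del /\
    forall s, a <= s < p -> p - del < s -> d (g s) L < e.

Definition right_limit_exists (b : R) (g : R -> X) (p : R) : Prop :=
  exists L, forall e, 0 < e -> exists del, 0 < del /\
    forall s, p < s <= b -> s < p + del -> d (g s) L < e.

Definition piecewise_continuous (T : R) (g : R -> X) : Prop :=
  exists P : list R,
    (forall t, 0 <= t <= T -> ~ In t P -> cont_within_at 0 T g t) /\
    (forall p, In p P -> 0 <= p <= T ->
       (0 < p -> left_limit_exists 0 g p) /\
       (p < T -> right_limit_exists T g p)).

Definition eps_close (F : R -> X -> X) (e T : R) (g : R -> X) : Prop :=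
  forall tau t, 0 <= tau <= 1 -> 0 <= t <= T - tau ->
    d (g (t + tau)) (F tau (g t)) < e.

Definition shadow_chain (F : R -> X -> X) (e : R) (x y : X) : Prop :=
  exists (T : R) (g : R -> X),
    1 <= T /\ piecewise_continuous T g /\ eps_close F e T g /\
    g 0 = x /\ g T = y.

Definition shadow_le (F : R -> X -> X) (x y : X) : Prop :=
  forall e, 0 < e -> shadow_chain F e x y.

Definition fixed_point (F : R -> X -> X) (x : X) : Prop :=
  forall t, 0 <= t -> F t x = x.

Definition chain_recurrent (rel : X -> X -> Prop) (F : R -> X -> X) (x : X) : Prop :=
  fixed_point F x \/ exists y, rel x y /\ rel y x.

Definition R_C (F : R -> X -> X) (x : X) : Prop := chain_recurrent (conley_le F) F x.
Definition R_S (F : R -> X -> X) (x : X) : Prop := chain_recurrent (shadow_le F) F x.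

End Defs.

(* Main.v *)
Require Import Defs.
From Stdlib Require Import Reals Lra Lia List Classical Arith.
Open Scope R_scope.

Lemma unif_pt (X : Type) (d : X -> X -> R) (F : R -> X -> X) :
  is_metric X d -> is_semiflow X d F ->
  forall y e, 0 < e -> exists r, 0 < r /\ forall z, d y z < r ->
     forall s, 0 <= s <= 1 -> d (F s y) (F s z) < e.
Proof.
  intros [Hpos [Hzero [Hsym Htri]]] [Hcont _] y e He.
  set (P := fun u => exists r, 0 < r /\ forall z, d y z < r ->
     forall s, 0 <= s <= u -> d (F s y) (F s z) < e).
  set (E := fun u => 0 <= u <= 1 /\ P u).
  assert (HE0 : E 0).
  { split. lra. destruct (Hcont 0 y (Rle_refl 0) e He) as [del [Hd H]].
    exists del; split; auto. intros z Hz s Hs. replace s with 0 by lra.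
    apply H; [lra| |auto]. replace (0-0) with 0 by ring; rewrite Rabs_R0; auto. }
  assert (Hb : bound E). { exists 1. intros u [Hu _]; lra. }
  destruct (completeness E Hb (ex_intro _ 0 HE0)) as [m [Hub Hlub]].
  assert (Hm0 : 0 <= m) by (apply Hub; auto).
  assert (Hm1 : m <= 1). { apply Hlub. intros u [Hu _]; lra. }
  destruct (Hcont m y Hm0 (e/2) ltac:(lra)) as [del [Hdel Hc]].
  assert (Hex : exists u, E u /\ m - del/2 < u).
  { apply NNPP; intro Hn.
    assert (m <= m - del/2); [|lra].
    apply Hlub. intros x Hx. apply Rnot_lt_le. intro Hlt. apply Hn. exists x; auto. }
  destruct Hex as [u [[Hu01 [r [Hr Hur]]] Hum]].
  assert (HPv : P (Rmin 1 (m + del/2))).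
  { exists (Rmin r del). split. apply Rmin_glb_lt; auto.
    intros z Hz s Hs.
    pose proof (Rmin_l r del); pose proof (Rmin_r r del).
    destruct (Rle_dec s u) as [Hsu|Hsu].
    - apply Hur; [lra|lra].
    - pose proof (Rmin_r 1 (m + del/2)).
      assert (Hab : Rabs (s - m) < del) by (apply Rabs_def1; lra).
      assert (HA1 : d (F m y) (F s y) < e/2).
      { apply Hc; [lra|auto|]. rewrite (proj2 (Hzero y y) eq_refl); auto. }
      assert (HA2 : d (F m y) (F s z) < e/2) by (apply Hc; [lra|auto|lra]).
      pose proof (Htri (F s y) (F m y) (F s z)) as HT. rewrite (Hsym (F s y) (F m y)) in HT. lra. }
  destruct (Rle_dec 1 (m + del/2)) as [Hc1|Hc1].
  - rewrite Rmin_left in HPv; auto.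
  - assert (Hv : Rmin 1 (m + del/2) = m + del/2) by (apply Rmin_right; lra).
    assert (E (m + del/2)). { split. lra. rewrite <- Hv; auto. }
    assert (m + del/2 <= m) by (apply Hub; auto). lra.
Qed.

Lemma min_list (A : Type) (l : list (prod A R)) : exists del, 0 < del /\
  forall p, In p l -> 0 < snd p -> del <= snd p / 2.
Proof.
  induction l as [|p l IH].
  - exists 1; split; [lra| intros p []].
  - destruct IH as [del [Hd H]].
    destruct (Rlt_dec 0 (snd p)) as [Hp|Hp].
    + exists (Rmin del (snd p / 2)). split. apply Rmin_glb_lt; lra.
      intros q [<-|Hq] Hq0. apply Rmin_r.
      pose proof (Rmin_l del (snd p/2)); pose proof (H q Hq Hq0); lra.
    + exists del; split; auto. intros q [<-|Hq] Hq0. contradiction. auto.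
Qed.

Lemma unif (X : Type) (d : X -> X -> R) (F : R -> X -> X) :
  is_metric X d -> compact_space X d -> is_semiflow X d F ->
  forall e, 0 < e -> exists del, 0 < del /\ forall z w, d z w < del ->
     forall s, 0 <= s <= 1 -> d (F s z) (F s w) < e.
Proof.
  intros Hmet Hcpt Hsf e He.
  pose proof Hmet as [Hpos [Hzero [Hsym Htri]]].
  set (Q := fun (y : X) (r : R) => forall z, d y z < r ->
     forall s, 0 <= s <= 1 -> d (F s y) (F s z) < e/2).
  set (U := fun (p : prod X R) (z : X) => 0 < snd p /\ Q (fst p) (snd p) /\ d (fst p) z < snd p / 2).
  destruct (Hcpt _ U) as [l Hl].
  - intros [y r] z [Hr [HQ Hz]]. simpl in *. exists (r/2 - d y z). split. lra.
    intros w Hw. split; [auto|split; auto]. simpl.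
    pose proof (Htri y z w); lra.
  - intros x. destruct (unif_pt X d F Hmet Hsf x (e/2) ltac:(lra)) as [r [Hr H]].
    exists (x, r). split; [auto|split; [exact H|]]. simpl.
    rewrite (proj2 (Hzero x x) eq_refl); lra.
  - destruct (min_list _ l) as [del [Hd Hdl]].
    exists del; split; auto. intros z w Hzw s Hs.
    destruct (Hl z) as [[y r] [Hin [Hr [HQ Hz]]]]. simpl in *.
    pose proof (Hdl _ Hin Hr); simpl in *.
    assert (Hyw : d y w < r) by (pose proof (Htri y z w); lra).
    pose proof (HQ z ltac:(lra) s Hs). pose proof (HQ w Hyw s Hs).
    pose proof (Htri (F s z) (F s y) (F s w)) as HT. rewrite (Hsym (F s z) (F s y)) in HT. lra.
Qed.
Fixpoint ssum (ts : nat -> R) (k : nat) : R :=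
  match k with O => 0 | S k => ssum ts k + ts k end.

Fixpoint cnt (s : nat -> R) (n : nat) (t : R) : nat :=
  match n with O => O | S n => (cnt s n t + (if Rle_dec (s (S n)) t then 1 else 0))%nat end.

Definition seg (s : nat -> R) (N k : nat) (t : R) : Prop :=
  (k <= N)%nat /\ s k <= t /\ ((k < N)%nat -> t < s (S k)).

Lemma mono2 ts N : (forall i, (i < N)%nat -> 2 <= ts i) ->
  forall m i, (i + m <= N)%nat -> ssum ts i + 2 * INR m <= ssum ts (i + m).
Proof.
  intros Hts m; induction m as [|m IH]; intros i Hi.
  - rewrite Nat.add_0_r; simpl; lra.
  - rewrite Nat.add_succ_r, S_INR. simpl. pose proof (IH i ltac:(lia)).
    pose proof (Hts (i+m)%nat ltac:(lia)). lra.
Qed.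

Lemma mono3 ts N : (forall i, (i < N)%nat -> 2 <= ts i) ->
  forall i j, (i <= j <= N)%nat -> ssum ts i + 2 * INR (j - i) <= ssum ts j.
Proof.
  intros Hts i j Hij. replace j with (i + (j - i))%nat at 2 by lia.
  apply (mono2 ts N Hts). lia.
Qed.

Lemma mono ts N : (forall i, (i < N)%nat -> 2 <= ts i) ->
  forall i j, (i <= j <= N)%nat -> ssum ts i <= ssum ts j.
Proof.
  intros Hts i j Hij. pose proof (mono3 ts N Hts i j Hij). pose proof (pos_INR (j - i)). lra.
Qed.

Lemma cnt_seg ts N k t : (forall i, (i < N)%nat -> 2 <= ts i) ->
  seg (ssum ts) N k t -> forall n, (n <= N)%nat -> cnt (ssum ts) n t = Nat.min n k.
Proof.
  intros Hts [HkN [Hk Hk2]] n; induction n as [|n IH]; intros Hn.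
  - reflexivity.
  - cbn [cnt]. rewrite IH by lia.
    destruct (le_lt_dec (S n) k) as [Hl|Hl].
    + destruct (Rle_dec (ssum ts (S n)) t) as [|Hno]. lia.
      exfalso; apply Hno. pose proof (mono ts N Hts (S n) k ltac:(lia)). lra.
    + destruct (Rle_dec (ssum ts (S n)) t) as [Hy|]; [|lia].
      exfalso. pose proof (Hk2 ltac:(lia)). pose proof (mono ts N Hts (S k) (S n) ltac:(lia)). lra.
Qed.

Lemma idx_seg ts N k t : (forall i, (i < N)%nat -> 2 <= ts i) ->
  seg (ssum ts) N k t -> cnt (ssum ts) N t = k.
Proof.
  intros Hts Hs. rewrite (cnt_seg ts N k t Hts Hs N) by lia. destruct Hs; lia.
Qed.

Lemma seg_exists ts N t : (forall i, (i < N)%nat -> 2 <= ts i) ->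
  0 <= t -> exists k, seg (ssum ts) N k t.
Proof.
  intros Hts Ht.
  assert (H : forall n, (n <= N)%nat -> t < ssum ts n ->
     exists k, (k < n)%nat /\ ssum ts k <= t /\ t < ssum ts (S k)).
  { induction n as [|n IH]; intros Hn Htn.
    - simpl in Htn; lra.
    - destruct (Rlt_dec t (ssum ts n)) as [Hl|Hl].
      + destruct (IH ltac:(lia) Hl) as [k [? ?]]. exists k; split; [lia|auto].
      + exists n. split; [lia|split; [lra|auto]]. }
  destruct (Rlt_dec t (ssum ts N)) as [Hl|Hl].
  - destruct (H N (le_n N) Hl) as [k [Hk [? ?]]]. exists k; split; [lia|split; auto].
  - exists N. split; [lia|split; [lra|lia]].
Qed.

Lemma chain_to_shadow (X : Type) (d : X -> X -> R) (F : R -> X -> X) e del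
  (N : nat) (xs : nat -> X) (ts : nat -> R) :
  is_metric X d -> is_semiflow X d F ->
  (forall z w, d z w < del -> forall s, 0 <= s <= 1 -> d (F s z) (F s w) < e) ->
  (1 <= N)%nat ->
  (forall i, (i < N)%nat -> 2 <= ts i /\ d (F (ts i) (xs i)) (xs (S i)) < del) ->
  0 < e ->
  shadow_chain X d F e (xs 0%nat) (xs N).
Proof.
  intros [Hpos [Hzero [Hsym Htri]]] [Hcont [HF0 Hsg]] Hu HN Hch He.
  assert (Hts : forall i, (i < N)%nat -> 2 <= ts i) by (intros i Hi; apply Hch; auto).
  set (s := ssum ts).
  set (g := fun t => F (t - s (cnt s N t)) (xs (cnt s N t))).
  assert (Hg : forall k t, seg s N k t -> g t = F (t - s k) (xs k)).
  { intros k t Hk. unfold g. pose proof (idx_seg ts N k t Hts Hk) as E. fold s in E. rewrite E. reflexivity. }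
  assert (Hdd : forall a, d a a = 0) by (intro a; apply Hzero; auto).
  assert (Hsc : forall k, s (S k) = s k + ts k) by reflexivity.
  assert (Hs0 : s 0%nat = 0) by reflexivity.
  assert (Hseg_cont : forall k u e', (k < N)%nat -> s k <= u <= s (S k) -> 0 < e' ->
     exists dl, 0 < dl /\ forall r, s k <= r < s (S k) -> Rabs (r - u) < dl ->
       d (g r) (F (u - s k) (xs k)) < e').
  { intros k u e' Hk Hu1 He'.
    destruct (Hcont (u - s k) (xs k) ltac:(lra) e' He') as [dl [Hdl Hc]].
    exists dl; split; auto. intros r Hr Hru.
    rewrite (Hg k r) by (split; [lia|split; [lra|intros; lra]]).
    rewrite Hsym. apply Hc. lra. replace (r - s k - (u - s k)) with (r - u) by ring; auto.
    rewrite Hdd; auto. }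
  exists (s N), g. split; [|split; [|split; [|split]]].
  - pose proof (mono3 ts N Hts 0 N ltac:(lia)). rewrite Nat.sub_0_r in H.
    pose proof (le_INR 1 N HN). simpl in H0. fold s in H. lra.
  -
    exists (map s (seq 0 (S N))). split.
    + intros t Ht Hnin e' He'.
      destruct (seg_exists ts N t Hts ltac:(lra)) as [k Hk].
      pose proof Hk as [HkN [Hk1 Hk2]]. fold s in Hk1, Hk2.
      assert (Hne : forall j, (j <= N)%nat -> t <> s j).
      { intros j Hj Heq. apply Hnin. apply in_map_iff. exists j. split; auto.
        apply in_seq. lia. }
      assert (HkN' : (k < N)%nat).
      { destruct (Nat.eq_dec k N) as [->|]; [|lia]. exfalso. apply (Hne N); auto. lra. }
      assert (Hlt : s k < t) by (assert (t <> s k) by (apply Hne; lia); lra).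
      specialize (Hk2 HkN').
      destruct (Hseg_cont k t e' HkN' ltac:(lra) He') as [dl [Hdl Hc]].
      exists (Rmin dl (Rmin (t - s k) (s (S k) - t))). split.
      { apply Rmin_glb_lt; [auto|apply Rmin_glb_lt; lra]. }
      intros r Hr Hrt.
      pose proof (Rmin_l dl (Rmin (t - s k) (s (S k) - t))).
      pose proof (Rmin_r dl (Rmin (t - s k) (s (S k) - t))).
      pose proof (Rmin_l (t - s k) (s (S k) - t)).
      pose proof (Rmin_r (t - s k) (s (S k) - t)).
      apply Rabs_def2 in Hrt.
      rewrite (Hg k t Hk). apply Hc. lra. apply Rabs_def1; lra.
    + intros p Hp Hp0. apply in_map_iff in Hp. destruct Hp as [j [<- Hj]].
      apply in_seq in Hj. split.
      * intros Hpos0. destruct j as [|k]. { rewrite Hs0 in Hpos0; lra. }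
        assert (Hk : (k < N)%nat) by lia.
        pose proof (Hts k Hk).
        exists (F (s (S k) - s k) (xs k)). intros e' He'.
        destruct (Hseg_cont k (s (S k)) e' Hk ltac:(rewrite Hsc; lra) He') as [dl [Hdl Hc]].
        exists (Rmin dl (ts k)). split. apply Rmin_glb_lt; lra.
        intros r Hr Hr2. pose proof (Rmin_l dl (ts k)); pose proof (Rmin_r dl (ts k)).
        apply Hc. rewrite Hsc in *; lra. apply Rabs_def1; lra.
      * intros HpT.
        assert (Hk : (j < N)%nat).
        { destruct (Nat.eq_dec j N) as [->|]; [lra|lia]. }
        pose proof (Hts j Hk).
        exists (F (s j - s j) (xs j)). intros e' He'.
        destruct (Hseg_cont j (s j) e' Hk ltac:(rewrite Hsc; lra) He') as [dl [Hdl Hc]].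
        exists (Rmin dl (ts j)). split. apply Rmin_glb_lt; lra.
        intros r Hr Hr2. pose proof (Rmin_l dl (ts j)); pose proof (Rmin_r dl (ts j)).
        apply Hc. rewrite Hsc in *; lra. apply Rabs_def1; lra.
  -
    intros tau t Htau Ht.
    destruct (seg_exists ts N t Hts ltac:(lra)) as [k Hk].
    destruct (seg_exists ts N (t + tau) Hts ltac:(lra)) as [k' Hk'].
    rewrite (Hg k t Hk), (Hg k' (t + tau) Hk').
    pose proof Hk as [HkN [Hk1 Hk2]]. pose proof Hk' as [HkN' [Hk1' Hk2']].
    fold s in Hk1, Hk2, Hk1', Hk2'.
    assert (Hle : (k <= k')%nat).
    { destruct (le_lt_dec k k') as [|Hl]; auto. exfalso.
      pose proof (Hk2' ltac:(lia)). pose proof (mono ts N Hts (S k') k ltac:(lia)).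
      fold s in H0. lra. }
    destruct (Nat.eq_dec k' k) as [->|Hneq].
    + rewrite <- Hsg by lra. replace (tau + (t - s k)) with (t + tau - s k) by ring.
      rewrite Hdd; auto.
    + assert (HkN2 : (k < N)%nat) by lia. specialize (Hk2 HkN2).
      destruct (Nat.eq_dec k' (S k)) as [->|Hn2].
      * rewrite <- Hsg by lra. rewrite Hsc in *.
        replace (tau + (t - s k)) with ((t + tau - (s k + ts k)) + ts k) by ring.
        pose proof (Hts k HkN2).
        rewrite Hsg by lra. apply Hu. rewrite Hsym. apply Hch; auto. lra.
      * exfalso. pose proof (mono3 ts N Hts (S k) k' ltac:(lia)).
        pose proof (le_INR 1 (k' - S k) ltac:(lia)). fold s in H. simpl in H0. lra.
  - rewrite (Hg 0%nat 0).
    + rewrite Hs0, Rminus_0_r. apply HF0.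
    + split; [lia|split]. rewrite Hs0; lra. intros. rewrite Hsc, Hs0.
      pose proof (Hts 0%nat ltac:(lia)); lra.
  - rewrite (Hg N (s N)). rewrite Rminus_diag. apply HF0.
    split; [lia|split; [lra|lia]].
Qed.

Theorem proposition3p2 (X : Type) (d : X -> X -> R) (F : R -> X -> X)
  (Hmet : is_metric X d) (Hcpt : compact_space X d) (Hsf : is_semiflow X d F) :
  (forall x y : X, conley_le X d F x y -> shadow_le X d F x y) /\
  (forall x : X, R_C X d F x -> R_S X d F x).
Proof.
  assert (P1 : forall x y : X, conley_le X d F x y -> shadow_le X d F x y).
  { intros x y Hc e He.
    destruct (unif X d F Hmet Hcpt Hsf e He) as [del [Hdel Hu]].
    destruct (Hc del 2 Hdel ltac:(lra)) as [N [xs [ts [HN [H0 [HNy Hch]]]]]].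
    subst x y. apply (chain_to_shadow X d F e del N xs ts Hmet Hsf Hu HN Hch He). }
  split; auto.
  intros x [Hfix | [y [H1 H2]]]; [left; auto | right; exists y; split; apply P1; auto].
Qed.
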